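(* Let $\mathfrak A$ and $\mathcal A$ be Banach algebras with $\mathcal A$ a Banach $\mathfrak A$-module with compatible actions, and suppose $\mathfrak A$ acts trivially on $\mathcal A$ from the left (or from the right). Let $X$ be a commutative Banach $(\mathcal A/\mathcal J)$-$\mathfrak A$-module such that every approximate identity of $\mathcal A/\mathcal J$ is also an approximate identity for $X$ (i.e. $e_i\cdot x\to x$ and $x\cdot e_i\to x$ for all $x\in X$). If $\mathcal A$ is $\mathfrak A$-module pseudo-amenable, then: (i) every continuous module derivation $D:\mathcal A/\mathcal J\to X$ is approximately inner; (ii) every continuous module derivation $D:\mathcal A/\mathcal J\to X^*$ is $w^*$-approximately inner, i.e. there is a net $(\xi_j)\subseteq X^*$ with $D(u)=w^*\text{-}\lim_j(u\cdot\xi_j-\xi_j\cdot u)$ for all $u\in\mathcal A/\mathcal J$.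
   Context: $\mathcal A$ is a Banach $\mathfrak A$-module with compatible actions: $\alpha\cdot(ab)=(\alpha\cdot a)b$, $(ab)\cdot\alpha=a(b\cdot\alpha)$. $\mathfrak A$ acts trivially on $\mathcal A$ from the left (right) if there is a continuous linear functional $f$ on $\mathfrak A$ with $\alpha\cdot a=f(\alpha)a$ (resp. $a\cdot\alpha=f(\alpha)a$) for all $\alpha,a$. $\mathcal J$ is the closed ideal of $\mathcal A$ generated by $\{(a\cdot\alpha)b-a(\alpha\cdot b):a,b\in\mathcal A,\alpha\in\mathfrak A\}$; $\mathcal A/\mathcal J$ is a Banach algebra and $\mathfrak A$-module. For a Banach algebra $\mathcal B$ that is a Banach $\mathfrak A$-module with compatible actions, a Banach $\mathcal B$-$\mathfrak A$-module is a Banach $\mathcal B$-bimodule and $\mathfrak A$-bimodule $X$ with $\alpha\cdot(b\cdot x)=(\alpha\cdot b)\cdot x$, $b\cdot(\alpha\cdot x)=(b\cdot\alpha)\cdot x$, $b\cdot(x\cdot\alpha)=(b\cdot x)\cdot\alpha$ and analogous right-hand identities; commutative if $\alpha\cdot x=x\cdot\alpha$. A module derivation $D:\mathcal B\to X$ is bounded linear with $D(bc)=D(b)\cdot c+b\cdot D(c)$, $D(\alpha\cdot b)=\alpha\cdot D(b)$, $D(b\cdot\alpha)=D(b)\cdot\alpha$; approximately inner if $D(b)=\lim_j(b\cdot x_j-x_j\cdot b)$ in norm for some net $(x_j)\subseteq X$. With $\mathcal I$ the closed span of $\{a\cdot\alpha\otimes b-a\otimes\alpha\cdot b\}$ in $\mathcal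 A\widehat\otimes\mathcal A$, $\mathcal A\widehat\otimes_{\mathfrak A}\mathcal A=(\mathcal A\widehat\otimes\mathcal A)/\mathcal I$ and $\widetilde\omega_{\mathcal A}(a\otimes b+\mathcal I)=ab+\mathcal J$, $\mathcal A$ is module pseudo-amenable if there is a net $(\widetilde u_j)\subseteq\mathcal A\widehat\otimes_{\mathfrak A}\mathcal A$ with $(\widetilde\omega_{\mathcal A}(\widetilde u_j))$ an approximate identity of $\mathcal A/\mathcal J$ and $a\cdot\widetilde u_j-\widetilde u_j\cdot a\to0$ for all $a\in\mathcal A$. *)

(* Defs.v *)
From HB Require Import structures.
From mathcomp Require Import all_boot all_order all_algebra.
From mathcomp Require Import all_classical all_reals all_analysis.
Set Implicit Arguments. Unset Strict Implicit. Unset Printing Implicit Defensive.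
Import Order.TTheory GRing.Theory Num.Theory.
Import numFieldNormedType.Exports.
Local Open Scope classical_set_scope.
Local Open Scope ring_scope.

Section Defs.
Variable K : numFieldType.

Definition directed (I : Type) (le : I -> I -> Prop) : Prop :=
  (exists i : I, True) /\ (forall i, le i i) /\
  (forall i j k, le i j -> le j k -> le i k) /\
  (forall i j, exists k, le i k /\ le j k).

Definition net_cvg (V : normedZmodType K) (I : Type) (le : I -> I -> Prop)
  (x : I -> V) (l : V) : Prop :=
  forall eps : K, 0 < eps -> exists i0, forall i, le i0 i -> `|x i - l| < eps.

Definition linear_map (U V : lmodType K) (f : U -> V) : Prop :=
  forall (c : K) x y, f (c *: x + y) = c *: f x + f y.

Definition linear_cont (U V : normedModType K) (f : U -> V) : Prop :=
  linear_map f /\ continuous f.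

Definition bounded_bilinear (U V W : normedModType K) (m : U -> V -> W) : Prop :=
  (forall x, linear_map (m x)) /\ (forall y, linear_map (fun x => m x y)) /\
  exists C : K, forall x y, `|m x y| <= C * `|x| * `|y|.

Definition banach_algebra (B : completeNormedModType K) (mul : B -> B -> B) : Prop :=
  bounded_bilinear mul /\ (forall a b c, mul a (mul b c) = mul (mul a b) c) /\
  (forall a b, `|mul a b| <= `|a| * `|b|).

Definition banach_bimodule (B X : completeNormedModType K) (mul : B -> B -> B)
  (l : B -> X -> X) (r : X -> B -> X) : Prop :=
  bounded_bilinear l /\ bounded_bilinear r /\
  (forall a b x, l (mul a b) x = l a (l b x)) /\
  (forall a b x, r x (mul a b) = r (r x a) b) /\
  (forall a b x, r (l a x) b = l a (r x b)).

(* A is a Banach U-module (U = frak A) with compatible actions *)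
Definition compatible_module (U A : completeNormedModType K)
  (mulU : U -> U -> U) (mulA : A -> A -> A) (aL : U -> A -> A) (aR : A -> U -> A) : Prop :=
  banach_bimodule mulU aL aR /\
  (forall al a b, aL al (mulA a b) = mulA (aL al a) b) /\
  (forall al a b, aR (mulA a b) al = mulA a (aR b al)).

Definition trivial_left (U A : completeNormedModType K) (aL : U -> A -> A) : Prop :=
  exists f : U -> K^o, linear_cont f /\ forall al a, aL al a = f al *: a.
Definition trivial_right (U A : completeNormedModType K) (aR : A -> U -> A) : Prop :=
  exists f : U -> K^o, linear_cont f /\ forall al a, aR a al = f al *: a.

Definition banach_BU_module (U B X : completeNormedModType K)
  (mulU : U -> U -> U) (mulB : B -> B -> B) (bL : U -> B -> B) (bR : B -> U -> B)
  (xL : B -> X -> X) (xR : X -> B -> X) (yL : U -> X -> X) (yR : X -> U -> X) : Prop :=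
  banach_bimodule mulB xL xR /\ banach_bimodule mulU yL yR /\
  (forall al b x, yL al (xL b x) = xL (bL al b) x) /\
  (forall al b x, xL b (yL al x) = xL (bR b al) x) /\
  (forall al b x, xL b (yR x al) = yR (xL b x) al) /\
  (forall al b x, yR (xR x b) al = xR x (bR b al)) /\
  (forall al b x, xR (yR x al) b = xR x (bL al b)) /\
  (forall al b x, xR (yL al x) b = yL al (xR x b)).

Definition subspace (V : lmodType K) (P : set V) : Prop :=
  P 0 /\ forall (c : K) x y, P x -> P y -> P (c *: x + y).

Definition closed_ideal (A : completeNormedModType K) (mul : A -> A -> A) (P : set A) : Prop :=
  subspace P /\ closed P /\ (forall a x, P x -> P (mul a x) /\ P (mul x a)).

Definition gen_closed_ideal (A : completeNormedModType K) (mul : A -> A -> A) (S : set A) : set A :=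
  fun a => forall P : set A, closed_ideal mul P -> S `<=` P -> P a.

Definition closed_span (V : normedModType K) (S : set V) : set V :=
  fun v => forall P : set V, subspace P -> closed P -> S `<=` P -> P v.

(* J = closed ideal generated by {(a.al)b - a(al.b)} *)
Definition module_ideal (U A : completeNormedModType K) (mulA : A -> A -> A)
  (aL : U -> A -> A) (aR : A -> U -> A) : set A :=
  gen_closed_ideal mulA [set x | exists a b al, x = mulA (aR a al) b - mulA a (aL al b)].

(* pi : V -> Q is (up to isometric isomorphism) the quotient map V -> V/N *)
Definition is_quotient_map (V Q : normedModType K) (pi : V -> Q) (N : set V) : Prop :=
  linear_map pi /\ (forall y, exists v, pi v = y) /\
  (forall v, pi v = 0 <-> N v) /\
  (forall v n, N n -> `|pi v| <= `|v - n|) /\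
  (forall v eps, 0 < eps -> exists n, N n /\ `|v - n| < `|pi v| + eps).

(** ** Projective tensor product (characterised by its universal property) *)
Definition is_proj_tensor (A B T : completeNormedModType K) (tens : A -> B -> T) : Prop :=
  bounded_bilinear tens /\ (forall a b, `|tens a b| <= `|a| * `|b|) /\
  forall (E : completeNormedModType K) (phi : A -> B -> E) (C : K),
    (forall a, linear_map (phi a)) -> (forall b, linear_map (fun a => phi a b)) ->
    (forall a b, `|phi a b| <= C * `|a| * `|b|) ->
    exists f : T -> E, linear_cont f /\ (forall a b, f (tens a b) = phi a b) /\
      (forall t, `|f t| <= C * `|t|) /\
      (forall g : T -> E, linear_cont g -> (forall a b, g (tens a b) = phi a b) -> g = f).

Definition approx_identity (B : completeNormedModType K) (mul : B -> B -> B)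
  (I : Type) (le : I -> I -> Prop) (e : I -> B) : Prop :=
  forall u, net_cvg le (fun i => mul (e i) u) u /\ net_cvg le (fun i => mul u (e i)) u.

(** Q with pi : A -> Q is A/J (mulQ its product).  T (with tens) is A \hat\otimes A,
   M (with q : T -> M) is A \hat\otimes_U A = T / I, lM, rM are the A-actions on M,
   om is \tilde\omega_A. *)
Definition module_pseudo_amenable (U A Q : completeNormedModType K)
  (mulA : A -> A -> A) (aL : U -> A -> A) (aR : A -> U -> A)
  (pi : A -> Q) (mulQ : Q -> Q -> Q) : Prop :=
  exists (T : completeNormedModType K) (tens : A -> A -> T)
         (M : completeNormedModType K) (q : T -> M)
         (lM : A -> M -> M) (rM : A -> M -> M) (om : M -> Q),
    is_proj_tensor tens /\
    is_quotient_map q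
      (closed_span [set t | exists a b al, t = tens (aR a al) b - tens a (aL al b)]) /\
    (forall a, linear_cont (lM a)) /\ (forall a, linear_cont (rM a)) /\
    (forall a b c, lM a (q (tens b c)) = q (tens (mulA a b) c)) /\
    (forall a b c, rM a (q (tens b c)) = q (tens b (mulA c a))) /\
    linear_cont om /\ (forall a b, om (q (tens a b)) = pi (mulA a b)) /\
    exists (I : Type) (le : I -> I -> Prop) (u : I -> M),
      directed le /\ approx_identity mulQ le (fun j => om (u j)) /\
      forall a, net_cvg le (fun j => lM a (u j) - rM a (u j)) 0.

Definition module_derivation (U B X : completeNormedModType K)
  (mulB : B -> B -> B) (bL : U -> B -> B) (bR : B -> U -> B)
  (xL : B -> X -> X) (xR : X -> B -> X) (yL : U -> X -> X) (yR : X -> U -> X)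
  (D : B -> X) : Prop :=
  linear_cont D /\
  (forall u v, D (mulB u v) = xR (D u) v + xL u (D v)) /\
  (forall al u, D (bL al u) = yL al (D u)) /\
  (forall al u, D (bR u al) = yR (D u) al).

Definition approx_inner (B X : completeNormedModType K)
  (xL : B -> X -> X) (xR : X -> B -> X) (D : B -> X) : Prop :=
  exists (I : Type) (le : I -> I -> Prop) (x : I -> X),
    directed le /\ forall u, net_cvg le (fun j => xL u (x j) - xR (x j) u) (D u).

(* Derivations into the dual X^* : an element of X^* is a continuous linear
   functional X -> K; the dual actions are (u.xi)(x) = xi(x.u), (xi.u)(x) = xi(u.x),
   and likewise for U.  D : B -> X^* is represented as D : B -> X -> K. *)
Definition dual_module_derivation (U B X : completeNormedModType K)
  (mulB : B -> B -> B) (bL : U -> B -> B) (bR : B -> U -> B)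
  (xL : B -> X -> X) (xR : X -> B -> X) (yL : U -> X -> X) (yR : X -> U -> X)
  (D : B -> X -> K^o) : Prop :=
  (forall u, linear_cont (D u)) /\
  (forall (c : K) u v x, D (c *: u + v) x = c * D u x + D v x) /\
  (exists C : K, forall u x, `|D u x| <= C * `|u| * `|x|) /\
  (forall u v x, D (mulB u v) x = D u (xL v x) + D v (xR x u)) /\
  (forall al u x, D (bL al u) x = D u (yR x al)) /\
  (forall al u x, D (bR u al) x = D u (yL al x)).

Definition wstar_approx_inner (B X : completeNormedModType K)
  (xL : B -> X -> X) (xR : X -> B -> X) (D : B -> X -> K^o) : Prop :=
  exists (I : Type) (le : I -> I -> Prop) (xi : I -> X -> K^o),
    directed le /\ (forall j, linear_cont (xi j)) /\
    forall u x, net_cvg le (fun j => xi j (xR x u) - xi j (xL u x)) (D u x).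

End Defs.

(* Main.v *)
Require Import Defs.
From HB Require Import structures.
From mathcomp Require Import all_boot all_order all_algebra.
From mathcomp Require Import all_classical all_reals all_analysis.
Import Order.TTheory GRing.Theory Num.Theory.
Import numFieldNormedType.Exports.
Local Open Scope classical_set_scope.
Local Open Scope ring_scope.
Set Implicit Arguments. Unset Strict Implicit.

Section Lin.
Variables (K : numFieldType) (V W : lmodType K) (f : V -> W) (hf : linear_map f).
Definition mkLin : {linear V -> W} := HB.pack f (GRing.isLinear.Build _ _ _ _ f hf).
Lemma lm0 : f 0 = 0. Proof. exact: (linear0 mkLin). Qed.
Lemma lmD x y : f (x + y) = f x + f y. Proof. exact: (linearD mkLin). Qed.
Lemma lmB x y : f (x - y) = f x - f y. Proof. exact: (linearB mkLin). Qed.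
Lemma lmN x : f (- x) = - f x. Proof. exact: (linearN mkLin). Qed.
Lemma lmZ c x : f (c *: x) = c *: f x. Proof. by rewrite -[c *: x]addr0 hf lm0 addr0. Qed.
End Lin.

Lemma lc_bound (K : numFieldType) (V W : normedModType K) (f : V -> W) :
  linear_cont f -> exists C, 0 < C /\ forall x, `|f x| <= C * `|x|.
Proof.
move=> [hf cf].
have := @continuous_linear_bounded K V W 0 (mkLin hf) (cf 0).
move=> /linear_boundedP/pinfty_ex_gt0 [r r0 Bf].
by exists r.
Qed.

Lemma bound_lc (K : numFieldType) (V W : normedModType K) (f : V -> W) :
  linear_map f -> (exists C, 0 <= C /\ forall x, `|f x| <= C * `|x|) -> linear_cont f.
Proof.
move=> hf [C [C0 hC]]; split => //.
apply: (@bounded_linear_continuous K V W (mkLin hf)).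
apply/linear_boundedP.
near=> r => x.
apply: le_trans (hC x) _; apply: ler_wpM2r => //.
near: r; apply: nbhs_pinfty_ge; exact: ger0_real.
Unshelve. all: by end_near.
Qed.

Lemma bound_nonneg (K : numFieldType) (V W E : normedModType K) (m : V -> W -> E) C :
  (forall x y, `|m x y| <= C * `|x| * `|y|) ->
  exists C', 0 <= C' /\ forall x y, `|m x y| <= C' * `|x| * `|y|.
Proof.
move=> hC; have [C0|C0] := boolP (0 <= C); first by exists C.
exists 0; split => // x y; rewrite !mul0r.
have := hC x y; rewrite -mulrA.
have : 0 <= `|x| * `|y| by rewrite mulr_ge0.
rewrite le0r => /orP [/eqP ->|hp]; first by rewrite mulr0.
move=> h; exfalso; move/negP: C0; apply.
by rewrite -(pmulr_lge0 _ hp); apply: le_trans h.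
Qed.

Lemma bb_bound (K : numFieldType) (V W E : normedModType K) (m : V -> W -> E) :
  bounded_bilinear m ->
  exists C, 0 <= C /\ forall x y, `|m x y| <= C * `|x| * `|y|.
Proof. by move=> [_ [_ [C hC]]]; exact: bound_nonneg hC. Qed.

Lemma closed_ker (K : numFieldType) (V W : normedModType K) (f : V -> W) :
  continuous f -> closed [set x | f x = 0].
Proof.
move=> cf.
have -> : [set x | f x = 0] = f @^-1` [set 0] by [].
apply: preimage_closed; first by move=> x _; exact: cf.
apply: accessible_closed_set1; apply: hausdorff_accessible; by [].
Qed.

Lemma net_comb (K : numFieldType) (V W E : normedModType K) (I : Type) (le : I -> I -> Prop)
  (a : I -> V) (b : I -> W) (l2 : W) (g : I -> E) (l : E) (C C' : K) :
  directed le -> 0 <= C -> 0 <= C' -> net_cvg le a 0 -> net_cvg le b l2 ->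
  (forall j, `|g j - l| <= C * `|a j| + C' * `|b j - l2|) -> net_cvg le g l.
Proof.
move=> [_ [_ [tr dir]]] C0 C'0 ha hb hg eps e0.
have e2 : 0 < eps / 2 by rewrite divr_gt0.
have C1 : 0 < C + 1 by rewrite ltr_wpDl.
have [i1 h1] := ha (eps / 2 / (C + 1)) (divr_gt0 e2 C1).
have C'1 : 0 < C' + 1 by rewrite ltr_wpDl.
have [i2 h2] := hb (eps / 2 / (C' + 1)) (divr_gt0 e2 C'1).
have [k [k1 k2]] := dir i1 i2.
exists k => i ki.
apply: le_lt_trans (hg i) _.
have -> : eps = eps / 2 + eps / 2 by rewrite -splitr.
apply: ler_ltD; last first.
  have := h2 i (tr _ _ _ k2 ki) => hbi.
  apply: le_lt_trans (ler_wpM2l C'0 (ltW hbi)) _.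
  rewrite mulrCA gtr_pMr // ltr_pdivrMr // mul1r ltrDl //.
have := h1 i (tr _ _ _ k1 ki); rewrite subr0 => /ltW hai.
apply: le_trans (ler_wpM2l C0 hai) _.
rewrite mulrCA ler_piMr ?ltW // ltr_pdivrMr // mul1r ltrDl //.
Qed.

Lemma lc0 (K : numFieldType) (V W : normedModType K) : linear_cont (fun _ : V => (0 : W)).
Proof.
apply: bound_lc; first by move=> c x y; rewrite scaler0 addr0.
by exists 0; split => // x; rewrite normr0 mul0r.
Qed.

Lemma factor (K : numFieldType) (U A T M E : completeNormedModType K)
  (aL : U -> A -> A) (aR : A -> U -> A) (tens : A -> A -> T) (q : T -> M)
  (phi : A -> A -> E) (C : K) :
  is_proj_tensor tens ->
  is_quotient_map q (closed_span [set t | exists a b al, t = tens (aR a al) b - tens a (aL al b)]) ->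
  (forall a, linear_map (phi a)) -> (forall b, linear_map (fun a => phi a b)) -> 0 <= C ->
  (forall a b, `|phi a b| <= C * `|a| * `|b|) ->
  (forall a b al, phi (aR a al) b = phi a (aL al b)) ->
  exists G : M -> E, linear_map G /\ (forall m, `|G m| <= C * `|m|) /\
    forall a b, G (q (tens a b)) = phi a b.
Proof.
move=> [_ [_ tu]] [ql [qs [qk [qn qe]]]] l1 l2 C0 hb hv.
have [f [[fl fc] [ft [fb _]]]] := tu E phi C l1 l2 hb.
set N := closed_span _ in qk qn qe.
have fN : forall t, N t -> f t = 0.
  move=> t Nt; apply: (Nt [set x | f x = 0]).
  - split; first by rewrite /= (lm0 fl).
    by move=> c x y /= hx hy; rewrite fl hx hy scaler0 addr0.
  - exact: (closed_ker fc).
  - by move=> t' [a [b [al ->]]] /=; rewrite (lmB fl) !ft hv subrr.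
have wd : forall t t', q t = q t' -> f t = f t'.
  move=> t t' e; apply/eqP; rewrite -subr_eq0 -(lmB fl); apply/eqP; apply: fN; apply/qk.
  by rewrite (lmB ql) e subrr.
pose v m := proj1_sig (cid (qs m)).
have vP : forall m, q (v m) = m := fun m => proj2_sig (cid (qs m)).
have C1 : 0 < C + 1 by rewrite ltr_wpDl.
exists (fun m => f (v m)); split; [|split].
- move=> c m m' /=; rewrite -fl; apply: wd; by rewrite ql !vP.
- move=> m; apply/ler_addgt0Pr => e e0.
  have [n [Nn hn]] := qe (v m) (e / (C + 1)) (divr_gt0 e0 C1).
  have -> : f (v m) = f (v m - n) by rewrite (lmB fl) (fN n Nn) subr0.
  apply: le_trans (fb _) _; rewrite vP in hn.
  apply: le_trans (ler_wpM2l C0 (ltW hn)) _.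
  rewrite mulrDr lerD2l mulrCA ler_piMr ?ltW // ltr_pdivrMr // mul1r ltrDl //.
- by move=> a b; rewrite -ft; apply: wd; rewrite vP.
Qed.

Lemma uniq0 (K : numFieldType) (A T M E : completeNormedModType K)
  (tens : A -> A -> T) (q : T -> M) (S : set T) (h : M -> E) :
  is_proj_tensor tens -> is_quotient_map q (closed_span S) -> linear_cont h ->
  (forall a b, h (q (tens a b)) = 0) -> forall m, h m = 0.
Proof.
move=> [_ [_ tu]] [ql [qs [qk [qn _]]]] hc h0 m.
have N0 : closed_span S 0 by move=> P [P0 _] _ _.
have gc : linear_cont (fun t => h (q t)).
  apply: bound_lc; first by move=> c x y; rewrite /= ql hc.1.
  have [Ch [Ch0 hCh]] := lc_bound hc.
  exists Ch; split; first exact: ltW.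
  move=> t; apply: le_trans (hCh _) _; apply: ler_wpM2l; first exact: ltW.
  by have := qn t 0 N0; rewrite subr0.
have z1 : forall a : A, linear_map (fun _ : A => (0 : E)).
  by move=> _ c x y; rewrite scaler0 addr0.
have z3 : forall a b : A, `|(0 : E)| <= 0 * `|a| * `|b|.
  by move=> a b; rewrite normr0 !mul0r.
have [f [_ [_ [_ fu]]]] := tu E (fun _ _ => 0) 0 z1 z1 z3.
have e1 := fu _ gc h0.
have e2 := fu (fun _ => 0) (@lc0 _ _ _) (fun _ _ => erefl).
have [t <-] := qs m.
by have := congr1 (fun g => g t) (etrans e1 (esym e2)).
Qed.

Lemma lc_comp (K : numFieldType) (V W Z : normedModType K) (f : V -> W) (g : W -> Z) :
  linear_cont f -> linear_cont g -> linear_cont (fun x => g (f x)).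
Proof.
move=> hf hg; apply: bound_lc.
  by move=> c x y; rewrite /= hf.1 hg.1.
have [Cf [Cf0 hCf]] := lc_bound hf; have [Cg [Cg0 hCg]] := lc_bound hg.
exists (Cg * Cf); split; first by rewrite mulr_ge0 ?ltW.
move=> x; apply: le_trans (hCg _) _; rewrite -mulrA; apply: ler_wpM2l; first exact: ltW.
exact: hCf.
Qed.

Lemma lc_add (K : numFieldType) (V W : normedModType K) (f g : V -> W) :
  linear_cont f -> linear_cont g -> linear_cont (fun x => f x + g x).
Proof.
move=> hf hg; apply: bound_lc.
  by move=> c x y; rewrite /= hf.1 hg.1 scalerDr !addrA (addrAC _ (f y)).
have [Cf [Cf0 hCf]] := lc_bound hf; have [Cg [Cg0 hCg]] := lc_bound hg.
exists (Cf + Cg); split; first by rewrite addr_ge0 ?ltW.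
move=> x; apply: le_trans (ler_normD _ _) _; rewrite mulrDl; exact: lerD.
Qed.

Lemma lc_opp (K : numFieldType) (V W : normedModType K) (f : V -> W) :
  linear_cont f -> linear_cont (fun x => - f x).
Proof.
move=> hf; apply: bound_lc.
  by move=> c x y; rewrite /= hf.1 opprD scalerN.
have [Cf [Cf0 hCf]] := lc_bound hf.
by exists Cf; split; [exact: ltW| move=> x; rewrite normrN].
Qed.

Lemma lc_sub (K : numFieldType) (V W : normedModType K) (f g : V -> W) :
  linear_cont f -> linear_cont g -> linear_cont (fun x => f x - g x).
Proof. by move=> hf hg; apply: lc_add => //; exact: lc_opp. Qed.

Lemma lc_scale (K : numFieldType) (V W : normedModType K) (f : V -> W) (k : K) :
  linear_cont f -> linear_cont (fun x => k *: f x).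
Proof.
move=> hf; apply: bound_lc.
  by move=> c x y; rewrite /= hf.1 scalerDr !scalerA mulrC.
have [Cf [Cf0 hCf]] := lc_bound hf.
exists (`|k| * Cf); split; first by rewrite mulr_ge0 // ltW.
move=> x; rewrite normrZ -mulrA; apply: ler_wpM2l => //; exact: hCf.

Qed.

Lemma lc_bl1 (K : numFieldType) (V W E : normedModType K) (m : V -> W -> E) x :
  bounded_bilinear m -> linear_cont (m x).
Proof.
move=> hm; apply: bound_lc; first exact: hm.1.
have [C [C0 hC]] := bb_bound hm.
exists (C * `|x|); split; first by rewrite mulr_ge0.
by move=> y; exact: hC.
Qed.

Lemma lc_bl2 (K : numFieldType) (V W E : normedModType K) (m : V -> W -> E) y :
  bounded_bilinear m -> linear_cont (fun x => m x y).
Proof.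
move=> hm; apply: bound_lc; first exact: hm.2.1.
have [C [C0 hC]] := bb_bound hm.
exists (C * `|y|); split; first by rewrite mulr_ge0.
by move=> x; rewrite mulrAC; exact: hC.
Qed.

Lemma lc_scal (K : numFieldType) (W : normedModType K) (x0 : W) :
  linear_cont (fun k : K^o => k *: x0).
Proof.
apply: bound_lc; first by move=> c x y; rewrite scalerDl scalerA.
exists `|x0|; split => // k; by rewrite normrZ mulrC.
Qed.

Lemma zm1 (V : zmodType) (x y z : V) : x - (y + z) + z - (x - y) = 0.
Proof. by rewrite opprD addrA addrNK subrr. Qed.

Lemma zm2 (V : zmodType) (a b c : V) : a - b - (a - (b + c) + c) = 0.
Proof. by rewrite (opprD b c) addrA addrNK subrr. Qed.
From mathcomp Require Import ring.
Unset Implicit Arguments.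
Theorem proposition3p6 (K : numFieldType)
  (U A : completeNormedModType K) (mulU : U -> U -> U) (mulA : A -> A -> A)
  (aL : U -> A -> A) (aR : A -> U -> A)
  (Q : completeNormedModType K) (pi : A -> Q) (mulQ : Q -> Q -> Q)
  (qL : U -> Q -> Q) (qR : Q -> U -> Q)
  (X : completeNormedModType K) (xL : Q -> X -> X) (xR : X -> Q -> X)
  (yL : U -> X -> X) (yR : X -> U -> X) :
  banach_algebra mulU -> banach_algebra mulA ->
  compatible_module mulU mulA aL aR ->
  (trivial_left aL \/ trivial_right aR) ->
  (* Q = A/J with quotient map pi and the induced product and U-actions *)
  is_quotient_map pi (module_ideal mulA aL aR) ->
  (forall a b, pi (mulA a b) = mulQ (pi a) (pi b)) ->
  (forall al a, qL al (pi a) = pi (aL al a)) ->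
  (forall a al, qR (pi a) al = pi (aR a al)) ->
  (* X is a commutative Banach (A/J)-U-module *)
  banach_BU_module mulU mulQ qL qR xL xR yL yR ->
  (forall al x, yL al x = yR x al) ->
  (* every approximate identity of A/J is an approximate identity for X *)
  (forall (I : Type) (le : I -> I -> Prop) (e : I -> Q),
     directed le -> approx_identity mulQ le e ->
     forall x, net_cvg le (fun i => xL (e i) x) x /\ net_cvg le (fun i => xR x (e i)) x) ->
  module_pseudo_amenable mulA aL aR pi mulQ ->
  (forall D : Q -> X, module_derivation mulQ qL qR xL xR yL yR D -> approx_inner xL xR D) /\
  (forall D : Q -> X -> K^o, dual_module_derivation mulQ qL qR xL xR yL yR D ->
     wstar_approx_inner xL xR D).
Proof.
move=> bU bA cm triv hq hmul hqL hqR hX hcomm hAI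
  [T [tens [M [q [lM [rM [om [ht [hqM [lMc [rMc [hl [hr [omc [homt
  [I [le [u [dir [ai hu]]]]]]]]]]]]]]]]]]]].
have [pl [ps [pk [pn pe]]]] := hq.
have N0 : module_ideal mulA aL aR 0 by move=> P [[P0 _] _] _.
have pb : forall a, `|pi a| <= `|a| by move=> a; have := pn a 0 N0; rewrite subr0.
have [[bxL [bxR [lmul [rmul lr]]]] [_ [a1 [a2 [a3 [a4 [a5 a6]]]]]]] := hX.
have [CL [CL0 hCL]] := bb_bound bxL.
have [CR [CR0 hCR]] := bb_bound bxR.
have xL1 := bxL.1. have xL2 := bxL.2.1.
have xR1 := bxR.1. have xR2 := bxR.2.1.
have [Com [Com0 hCom]] := lc_bound omc.
split.
- move=> D [[Dl Dc] [Dm [DqL DqR]]].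
  have [CD [CD0 hCD]] := lc_bound (conj Dl Dc).
  pose phi b c := xL (pi b) (D (pi c)).
  have := @factor K U A T M X aL aR tens q phi (CL * CD) ht hqM.
  case.
  + by move=> b k x y; rewrite /phi pl Dl xL1.
  + by move=> c k x y; rewrite /phi pl; apply: xL2.
  + by rewrite mulr_ge0 // ltW.
  + move=> a b; rewrite /phi; apply: le_trans (hCL _ _) _.
    have h2 : `|D (pi b)| <= CD * `|b|.
      by apply: le_trans (hCD _) _; apply: ler_wpM2l; [exact: ltW|exact: pb].
    apply: le_trans (ler_pM _ _ (ler_wpM2l CL0 (pb a)) h2) _.
    * by rewrite mulr_ge0.
    * by [].
    * by rewrite le_eqVlt; apply/orP; left; apply/eqP; ring.
  + by move=> a b al; rewrite /phi -hqR -hqL DqL a2.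
  move=> G [Gl [Gb Gt]].
  have Glc : linear_cont G.
    by apply: bound_lc => //; exists (CL * CD); split; [rewrite mulr_ge0 // ltW|].
  have iden : forall a m, G (lM a m) - G (rM a m) + xL (om m) (D (pi a)) =
                          xL (pi a) (G m) - xR (G m) (pi a).
    move=> a m; apply/eqP; rewrite -subr_eq0; apply/eqP; move: m.
    apply: (uniq0 ht hqM).
    * apply: lc_sub; first apply: lc_add; first apply: lc_sub.
      - exact: lc_comp (lMc a) Glc.
      - exact: lc_comp (rMc a) Glc.
      - exact: lc_comp omc (lc_bl2 _ bxL).
      - apply: lc_sub; first exact: lc_comp Glc (lc_bl1 _ bxL).
        exact: lc_comp Glc (lc_bl2 _ bxR).
    * move=> b c; rewrite hl hr homt !Gt /phi !hmul Dm !lmul (lmD (xL1 _)) lr.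
      exact: zm1.
  exists I, le, (fun j => G (u j)); split => // w.
  have [a <-] := ps w.
  apply: (@net_comb K M X X I le (fun j => lM a (u j) - rM a (u j))
            (fun j => xL (om (u j)) (D (pi a))) (D (pi a)) _ _ (CL * CD) 1 dir).
  + by rewrite mulr_ge0 // ltW.
  + by [].
  + exact: hu.
  + exact: (hAI I le (fun j => om (u j)) dir ai (D (pi a))).1.
  + move=> j; rewrite -iden -(lmB Gl) mul1r -addrA.
    apply: le_trans (ler_normD _ _) _; apply: lerD => //; exact: Gb.
- move=> D [Dlc [Dlin [[CD' hCD'] [Dm [DqL DqR]]]]].
  have [CD [CD0 hCD]] := bound_nonneg hCD'.
  case: (pselect (exists w x, D w x != 0)) => [[w0 [x0 nz]]|nz]; last first.
    exists I, le, (fun _ _ => (0 : K^o)); split => //; split.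
      by move=> j; exact: lc0.
    move=> w x eps e0; have [[i0 _] _] := dir; exists i0 => i _.
    have Dz : D w x = 0.
      by apply/eqP; apply/negP => h; apply: nz; exists w, x; apply/negP.
    by rewrite Dz !subr0 normr0.
  pose ph (x : X) : K^o := (D w0 x0)^-1 *: D w0 x.
  have phlc : linear_cont ph := lc_scale (D w0 x0)^-1 (Dlc w0).
  have phl := phlc.1.
  have ph1 : ph x0 = 1.
    by rewrite /ph; change ((D w0 x0)^-1 * D w0 x0 = 1); rewrite mulVf.
  have phZ : forall k : K, ph (k *: x0) = k.
    by move=> k; rewrite (lmZ phl) ph1; change (k * 1 = k); rewrite mulr1.
  have [Cf [Cf0 hCf]] := lc_bound phlc.
  pose Cx (x : X) := CD * CR * `|x| * `|x0|.
  have Cx0 : forall x, 0 <= Cx x by move=> x; rewrite /Cx !mulr_ge0.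
  pose phi (x : X) (b c : A) := (D (pi c) (xR x (pi b)) : K^o) *: x0.
  have HG : forall x, exists G : M -> X, linear_map G /\
      (forall m, `|G m| <= Cx x * `|m|) /\ forall a b, G (q (tens a b)) = phi x a b.
    move=> x; apply: (@factor K U A T M X aL aR tens q (phi x) (Cx x) ht hqM).
    + by move=> b k y z; rewrite /phi pl Dlin scalerDl scalerA.
    + by move=> c k y z; rewrite /phi pl xR1 (Dlc _).1 scalerDl scalerA.
    + exact: Cx0.
    + move=> a b; rewrite /phi normrZ.
      have -> : Cx x * `|a| * `|b| = (CD * `|b| * (CR * `|x| * `|a|)) * `|x0|
        by rewrite /Cx; ring.
      apply: ler_wpM2r => //.
      have hxr : `|xR x (pi a)| <= CR * `|x| * `|a|.
        apply: le_trans (hCR _ _) _; apply: ler_wpM2l; first by rewrite mulr_ge0.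
        exact: pb.
      apply: le_trans (hCD _ _) _.
      apply: ler_pM => //; first by rewrite mulr_ge0.
      by apply: ler_wpM2l => //; exact: pb.
    + by move=> a b al; rewrite /phi -hqR -hqL DqL a4.
  pose GG x := proj1_sig (cid (HG x)).
  have GGl : forall x, linear_map (GG x) by move=> x; exact: (proj2_sig (cid (HG x))).1.
  have GGb : forall x m, `|GG x m| <= Cx x * `|m|.
    by move=> x; exact: (proj2_sig (cid (HG x))).2.1.
  have GGt : forall x a b, GG x (q (tens a b)) = phi x a b.
    by move=> x; exact: (proj2_sig (cid (HG x))).2.2.
  have GGlc : forall x, linear_cont (GG x).
    by move=> x; apply: bound_lc => //; exists (Cx x); split.
  have xR2' : forall k x y b, xR (k *: x + y) b = k *: xR x b + xR y b.
    by move=> k x y b; exact: (xR2 b k x y).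
  have GGlin : forall k x y m, GG (k *: x + y) m = k *: GG x m + GG y m.
    move=> k x y m; apply/eqP; rewrite -subr_eq0; apply/eqP; move: m.
    apply: (uniq0 ht hqM).
      apply: lc_sub; first exact: GGlc.
      by apply: lc_add; [exact: lc_scale|exact: GGlc].
    by move=> a b; rewrite !GGt /phi xR2' (Dlc _).1 scalerDl scalerA subrr.
  pose xi j x := ph (GG x (u j)).
  exists I, le, xi; split => //; split.
  + move=> j; apply: bound_lc.
      by move=> k x y; rewrite /xi GGlin phl.
    exists (Cf * (CD * CR * `|x0| * `|u j|)); split.
      by rewrite !mulr_ge0 // ltW.
    move=> x; apply: le_trans (hCf _) _.
    apply: le_trans (ler_wpM2l (ltW Cf0) (GGb x (u j))) _.
    by rewrite /Cx le_eqVlt; apply/orP; left; apply/eqP; ring.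
  + move=> w x; have [a <-] := ps w.
    have iden2 : forall m, GG (xR x (pi a)) m - GG (xL (pi a) x) m =
        GG x (lM a m - rM a m) + (D (pi a) (xR x (om m)) : K^o) *: x0.
      move=> m; apply/eqP; rewrite -subr_eq0; apply/eqP; move: m.
      apply: (uniq0 ht hqM).
        apply: lc_sub; first by apply: lc_sub; exact: GGlc.
        apply: lc_add; first exact: lc_comp (lc_sub (lMc a) (rMc a)) (GGlc x).
        apply: lc_comp (lc_scal x0).
        exact: lc_comp (lc_comp omc (lc_bl1 x bxR)) (Dlc (pi a)).
      move=> b c; rewrite (lmB (GGl x)) hl hr homt !GGt /phi !hmul Dm -lr !rmul.
      by rewrite scalerDl zm2.
    apply: (@net_comb K M X K^o I le (fun j => lM a (u j) - rM a (u j))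
              (fun j => xR x (om (u j))) x _ _ (Cf * Cx x) (CD * `|pi a|) dir).
    * by rewrite mulr_ge0 // ltW.
    * by rewrite mulr_ge0.
    * exact: hu.
    * exact: (hAI I le (fun j => om (u j)) dir ai x).2.
    * move=> j; rewrite /xi -(lmB phl) iden2 (lmD phl) phZ -addrA -(lmB (Dlc (pi a)).1).
      apply: le_trans (ler_normD _ _) _; apply: lerD; last exact: hCD.
      apply: le_trans (hCf _) _; rewrite -mulrA; apply: ler_wpM2l; first exact: ltW.
      exact: GGb.
Qed.
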